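(* Let $0<\epsilon<1/3$. Suppose $H=(X^1\cup X^2\cup X^3,E)$ is a $3$-partite $3$-graph, $D_1,D_2,D_3\subseteq V(H)$, and $(D_1,D_2,D_3)$ is an $\epsilon$-regular triple in $H$. Then one of the following holds: (1) $d_H(D_1,D_2,D_3)\leq\epsilon$; or (2) there are pairwise distinct $f(1),f(2),f(3)\in\{1,2,3\}$ such that $|D_i\cap X^{f(i)}|\geq(1-2\epsilon)|D_i|$ for each $i\in\{1,2,3\}$.
   Context: A $3$-graph $H=(V,E)$ is $3$-partite with partition $V=X^1\cup X^2\cup X^3$ if every edge meets each $X^i$ in at most one vertex. For nonempty $X,Y,Z\subseteq V$, $d_H(X,Y,Z)=|\{(x,y,z)\in X\times Y\times Z:\{x,y,z\}\in E\}|/(|X||Y||Z|)$. A triple $(X,Y,Z)$ is $\epsilon$-regular in $H$ if for all $X'\subseteq X,Y'\subseteq Y,Z'\subseteq Z$ with $|X'|\ge\epsilon|X|,|Y'|\ge\epsilon|Y|,|Z'|\ge\epsilon|Z|$, $|d_H(X,Y,Z)-d_H(X',Y',Z')|\le\epsilon$. *)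

(* Defs.v *)
From HB Require Import structures.
From mathcomp Require Import all_boot all_order all_algebra.
Set Implicit Arguments. Unset Strict Implicit. Unset Printing Implicit Defensive.
Import Order.TTheory GRing.Theory Num.Theory.
Local Open Scope ring_scope.

Definition is_3graph (V : finType) (E : {set {set V}}) : Prop :=
  forall e, e \in E -> #|e| = 3%N.

Definition is_3partite (V : finType) (E : {set {set V}}) (X : 'I_3 -> {set V}) : Prop :=
  [/\ (forall v : V, exists i, v \in X i),
      (forall i j, i != j -> [disjoint X i & X j]) &
      (forall e, e \in E -> forall i, (#|e :&: X i| <= 1)%N)].

Definition density (R : realFieldType) (V : finType) (E : {set {set V}})
  (X Y Z : {set V}) : R :=
  (#|[set t in setX (setX X Y) Z | [set t.1.1; t.1.2; t.2] \in E]|)%:R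
  / (#|X| * #|Y| * #|Z|)%:R.

Definition eps_regular (R : realFieldType) (V : finType) (E : {set {set V}})
  (eps : R) (X Y Z : {set V}) : Prop :=
  forall X' Y' Z' : {set V},
    X' \subset X -> Y' \subset Y -> Z' \subset Z ->
    eps * (#|X|)%:R <= (#|X'|)%:R ->
    eps * (#|Y|)%:R <= (#|Y'|)%:R ->
    eps * (#|Z|)%:R <= (#|Z'|)%:R ->
    `|@density R V E X Y Z - @density R V E X' Y' Z'| <= eps.

(* Main.v *)
Require Import Defs.
From HB Require Import structures.
From mathcomp Require Import all_boot all_order all_algebra.
From mathcomp Require Import lra.
Import Order.TTheory GRing.Theory Num.Theory.
Local Open Scope ring_scope.
Set Implicit Arguments. Unset Strict Implicit.

Lemma triple_distinct (V : finType) (E : {set {set V}}) x y z :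
  is_3graph E -> [set x; y; z] \in E -> [/\ x != y, x != z & y != z].
Proof.
move=> H3 He; have := H3 _ He.
have c2 (a b : V) : (#|[set a; b]| <= 2)%N by rewrite cards2; case: (a != b).
have sub (A B : {set V}) : A \subset B -> #|A| = 3%N -> (#|B| <= 2)%N -> False.
  by move=> /subset_leq_card h e1 h2; move: (leq_trans h h2); rewrite e1.
move=> e3; split; apply/negP => /eqP e; subst.
- by apply: (sub _ [set y; z] _ e3 (c2 _ _)); apply/subsetP => w; rewrite !inE; move=> /orP[/orP[]|] /eqP ->; rewrite eqxx ?orbT.
- by apply: (sub _ [set z; y] _ e3 (c2 _ _)); apply/subsetP => w; rewrite !inE; move=> /orP[/orP[]|] /eqP ->; rewrite eqxx ?orbT.
- by apply: (sub _ [set x; z] _ e3 (c2 _ _)); apply/subsetP => w; rewrite !inE; move=> /orP[/orP[]|] /eqP ->; rewrite eqxx ?orbT.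
Qed.

Lemma same_class (V : finType) (E : {set {set V}}) X e a b j :
  is_3partite E X -> e \in E -> a \in e -> b \in e -> a \in X j -> b \in X j -> a = b.
Proof.
case=> _ _ H He ae be aX bX; have := H e He j.
have : [set a; b] \subset e :&: X j by apply/subsetP => w; rewrite !inE; case/orP => /eqP ->; rewrite ?ae ?be ?aX ?bX.
move=> /subset_leq_card h1 h2; have := leq_trans h1 h2; rewrite cards2.
by case: eqP.
Qed.

Lemma dens0 (R : realFieldType) (V : finType) (E : {set {set V}}) (A B C : {set V}) :
  (forall x y z, x \in A -> y \in B -> z \in C -> [set x; y; z] \notin E) ->
  @density R V E A B C = 0.
Proof.
move=> H; rewrite /density.
have -> : [set t in setX (setX A B) C | [set t.1.1; t.1.2; t.2] \in E] = set0.
  apply/setP => [[[x y] z]]; rewrite !inE /=.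
  by apply/negP => /andP[/andP[/andP[xa yb] zc]]; apply/negP; apply: H.
by rewrite cards0 mul0r.
Qed.

Lemma card_part (V : finType) (X : 'I_3 -> {set V}) (D : {set V}) :
  (forall v : V, exists i, v \in X i) ->
  (forall i j, i != j -> [disjoint X i & X j]) ->
  #|D| = #|D :&: X 0| + #|D :&: X 1| + #|D :&: X 2| :> nat.
Proof.
move=> Hc Hd.
have e j : #|D :&: X j| = (\sum_(x in D) (x \in X j))%N.
  rewrite -sum1_card big_mkcond [RHS]big_mkcond /=; apply: eq_bigr => x _; rewrite inE; by case: (x \in D); case: (x \in X j).
rewrite !e -!big_split /= -sum1_card; apply: eq_bigr => x _.
have F k l : k != l -> x \in X k -> x \in X l -> False.
  by move=> kl xk; rewrite (disjointFr (Hd _ _ kl) xk).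
have [i xi] := Hc x.
have : i = 0 \/ i = 1 \/ i = 2.
  by case: i {xi} => [[|[|[|]]]] // Hi; [left|right;left|right;right]; apply/val_inj.
case E0: (x \in X 0); case E1: (x \in X 1); case E2: (x \in X 2) => //.
all: move=> H; try (exfalso; first [by apply: (F 0 1) | by apply: (F 0 2) | by apply: (F 1 2)]).
by case: H => [|[]] ei; move: xi; rewrite ei ?E0 ?E1 ?E2.
Qed.

Lemma ord3 (i : 'I_3) : i = 0 \/ i = 1 \/ i = 2.
Proof. by case: i => [[|[|[|]]]] // Hi; [left|right;left|right;right]; apply/val_inj. Qed.

Theorem lemma5p2 (R : realFieldType) (V : finType) (E : {set {set V}})
  (X : 'I_3 -> {set V}) (D : 'I_3 -> {set V}) (eps : R) :
  0 < eps -> eps < 3^-1 ->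
  is_3graph E -> is_3partite E X ->
  (forall i, D i != set0) ->
  @eps_regular R V E eps (D 0) (D 1) (D 2) ->
  @density R V E (D 0) (D 1) (D 2) <= eps \/
  exists f : 'I_3 -> 'I_3, injective f /\
    forall i, (1 - 2 * eps) * (#|D i|)%:R <= (#|D i :&: X (f i)|)%:R.
Proof.
move=> e0 e3 H3 HP Dne Hreg.
have [Hc Hd _] := HP.
case: (lerP (@density R V E (D 0) (D 1) (D 2)) eps) => [hle|hd]; [by left|right].
have e1 n : eps * n%:R <= n%:R :> R by apply: ler_piMl => //; lra.
have noE (A B C : {set V}) j : (A \subset X j /\ B \subset X j) \/ (A \subset X j /\ C \subset X j)
    \/ (B \subset X j /\ C \subset X j) ->
    forall x y z, x \in A -> y \in B -> z \in C -> [set x; y; z] \notin E.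
  move=> H x y z xA yB zC; apply/negP => hE.
  have [nxy nxz nyz] := triple_distinct H3 hE.
  have inx : x \in [set x; y; z] by rewrite !inE eqxx.
  have iny : y \in [set x; y; z] by rewrite !inE eqxx ?orbT.
  have inz : z \in [set x; y; z] by rewrite !inE eqxx ?orbT.
  case: H => [[sA sB]|[[sA sB]|[sA sB]]].
  - by move/eqP: nxy; apply; apply: (same_class HP hE inx iny); [exact: (subsetP sA) | exact: (subsetP sB)].
  - by move/eqP: nxz; apply; apply: (same_class HP hE inx inz); [exact: (subsetP sA) | exact: (subsetP sB)].
  - by move/eqP: nyz; apply; apply: (same_class HP hE iny inz); [exact: (subsetP sA) | exact: (subsetP sB)].
have contra (A B C : {set V}) : A \subset D 0 -> B \subset D 1 -> C \subset D 2 ->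
    eps * (#|D 0|)%:R <= (#|A|)%:R -> eps * (#|D 1|)%:R <= (#|B|)%:R ->
    eps * (#|D 2|)%:R <= (#|C|)%:R ->
    (forall x y z, x \in A -> y \in B -> z \in C -> [set x; y; z] \notin E) -> False.
  move=> sA sB sC bA bB bC hE; have := Hreg _ _ _ sA sB sC bA bB bC.
  rewrite (dens0 R hE) subr0 => h; have := ler_norm (@density R V E (D 0) (D 1) (D 2)); lra.
pose big i j := eps * (#|D i|)%:R <= (#|D i :&: X j|)%:R.
have disj i k j : i != k -> big i j -> big k j -> False.
  have I j' (Z : {set V}) : Z :&: X j' \subset X j' by apply: subsetIr.
  have [->|[->|->]] := ord3 i; have [->|[->|->]] := ord3 k => // _.
  - by move=> b0 b1; apply: (contra _ _ _ (subsetIl _ (X j)) (subsetIl _ (X j)) (subxx _) b0 b1 (e1 _)); apply: (noE _ _ _ j); left; split; apply: I.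
  - by move=> b0 b1; apply: (contra _ _ _ (subsetIl _ (X j)) (subxx _) (subsetIl _ (X j)) b0 (e1 _) b1); apply: (noE _ _ _ j); right; left; split; apply: I.
  - by move=> b1 b0; apply: (contra _ _ _ (subsetIl _ (X j)) (subsetIl _ (X j)) (subxx _) b0 b1 (e1 _)); apply: (noE _ _ _ j); left; split; apply: I.
  - by move=> b1 b0; apply: (contra _ _ _ (subxx _) (subsetIl _ (X j)) (subsetIl _ (X j)) (e1 _) b1 b0); apply: (noE _ _ _ j); right; right; split; apply: I.
  - by move=> b1 b0; apply: (contra _ _ _ (subsetIl _ (X j)) (subxx _) (subsetIl _ (X j)) b0 (e1 _) b1); apply: (noE _ _ _ j); right; left; split; apply: I.
  - by move=> b1 b0; apply: (contra _ _ _ (subxx _) (subsetIl _ (X j)) (subsetIl _ (X j)) (e1 _) b0 b1); apply: (noE _ _ _ j); right; right; split; apply: I.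
have cp i := card_part (D i) Hc Hd.
have ex i : exists j, big i j.
  have pos : (0 < #|D i|)%N by rewrite card_gt0.
  have posR : 0 < (#|D i|)%:R :> R by rewrite ltr0n.
  have h := cp i; move/(congr1 (fun n : nat => n%:R : R)): h; rewrite !natrD => h.
  case B0: (big i 0); first by exists 0.
  case B1: (big i 1); first by exists 1.
  case B2: (big i 2); first by exists 2.
  move: B0 B1 B2; rewrite /big => /negbT; rewrite -ltNge => B0 /negbT; rewrite -ltNge => B1 /negbT; rewrite -ltNge => B2.
  exfalso; nra.
pose f i := odflt 0 [pick j | big i j].
have fP i : big i (f i).
  rewrite /f; case: pickP => [j //|] /= H0; have [j bj] := ex i; by move: (H0 j); rewrite bj.
have finj : injective f.
  move=> i k fik; apply/eqP; apply/negPn/negP => ik; apply: (disj i k (f i) ik (fP i)); rewrite fik; exact: fP.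
exists f; split => // i.
have [g fg gf] := injF_bij finj.
have nb k : k != f i -> (#|D i :&: X k|)%:R < eps * (#|D i|)%:R :> R.
  move=> kf; rewrite ltNge; apply/negP => bk.
  have gi : g k != i by apply: contraNneq kf => <-; rewrite gf.
  by apply: (disj _ _ k gi _ bk); rewrite -{2}(gf k); apply: fP.
have h := cp i; move/(congr1 (fun n : nat => n%:R : R)): h; rewrite !natrD => h.
have [e|[e|e]] := ord3 (f i); rewrite e in nb *.
- by have := nb 1 isT; have := nb 2 isT; lra.
- by have := nb 0 isT; have := nb 2 isT; lra.
- by have := nb 0 isT; have := nb 1 isT; lra.
Qed.
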